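(* Let $\mathbb{A}$ be a monoidal category and $\mathbb{X}$ a right $\mathbb{A}$-enriched category. Fix $X\in\mathbb{X}$, $A\in\mathbb{A}$ and an object $X\lhd A\in\mathbb{X}$, and suppose given, for all $B\in\mathbb{A}$ and $Y\in\mathbb{X}$, mutually inverse bijections $(-)^\Downarrow$ from morphisms $f:B\to\mathrm{Hom}(X\lhd A,Y)$ to morphisms $A\otimes B\to\mathrm{Hom}(X,Y)$ and $(-)^\Uparrow$ in the reverse direction. Then the following are equivalent: (i) there exists $\eta:A\to\mathrm{Hom}(X,X\lhd A)$ such that $(f)^\Downarrow=(\eta\otimes f)m$ for all such $f$; (ii) for all morphisms of the appropriate types: (a) $(1\otimes h)(f)^\Downarrow=(hf)^\Downarrow$; (b) $h(g)^\Uparrow=((1\otimes h)g)^\Uparrow$; (c) $((f)^\Downarrow\otimes g)m=a_\otimes((f\otimes g)m)^\Downarrow$; (d) $((f)^\Uparrow\otimes g)m=(a_\otimes(f\otimes g)m)^\Uparrow$. Here in (a) $h:B'\to B$, $f:B\to\mathrm{Hom}(X\lhd A,Y)$; in (b) $h:B'\to B$, $g:A\otimes B\to\mathrm{Hom}(X,Y)$; in (c) $f:B\to\mathrm{Hom}(X\lhd A,Y)$, $g:C\to\mathrm{Hom}(Y,Z)$; in (d) $f:A\otimes B\to\mathrm{Hom}(X,Y)$, $g:C\to\mathrm{Hom}(Y,Z)$; and $a_\otimes:(A\otimes B)\otimes C\to A\otimes(B\otimes C)$ is the associativity isomorphism.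
   Context: Composition is written in diagrammatic order: $fg$ means first $f$ then $g$. $\mathbb{A}$ is monoidal with tensor $\otimes$, unit $I$, associator $a_\otimes$ and unitors $u^L_\otimes:I\otimes A\to A$, $u^R_\otimes:A\otimes I\to A$. A right $\mathbb{A}$-enriched category $\mathbb{X}$ has hom-objects $\mathrm{Hom}(X,Y)\in\mathbb{A}$, composition morphisms $m=m_{XYZ}:\mathrm{Hom}(X,Y)\otimes\mathrm{Hom}(Y,Z)\to\mathrm{Hom}(X,Z)$ and units $id_X:I\to\mathrm{Hom}(X,X)$ satisfying the associativity law $(m\otimes1)m=a_\otimes(1\otimes m)m$ and unit laws $(id\otimes1)m=u^L_\otimes$, $(1\otimes id)m=u^R_\otimes$. *)

(* Defs.v *)
(* Composition is written in diagrammatic order: comp f g = "f then g". *)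

Set Implicit Arguments.
Unset Strict Implicit.

Record MonoidalCategory := {
  ob : Type;
  hom : ob -> ob -> Type;
  idm : forall a, hom a a;
  comp : forall a b c, hom a b -> hom b c -> hom a c;
  comp_id_l : forall a b (f : hom a b), comp (idm a) f = f;
  comp_id_r : forall a b (f : hom a b), comp f (idm b) = f;
  comp_assoc : forall a b c d (f : hom a b) (g : hom b c) (h : hom c d),
      comp (comp f g) h = comp f (comp g h);
  tens : ob -> ob -> ob;
  tensm : forall a b c d, hom a b -> hom c d -> hom (tens a c) (tens b d);
  tens_id : forall a b, tensm (idm a) (idm b) = idm (tens a b);
  tens_comp : forall a b c a' b' c' (f : hom a b) (g : hom b c)
      (f' : hom a' b') (g' : hom b' c'),
      tensm (comp f g) (comp f' g') = comp (tensm f f') (tensm g g');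
  unit : ob;
  assoc : forall a b c, hom (tens (tens a b) c) (tens a (tens b c));
  assoc_inv : forall a b c, hom (tens a (tens b c)) (tens (tens a b) c);
  assoc_inv_l : forall a b c, comp (assoc a b c) (assoc_inv a b c) = idm _;
  assoc_inv_r : forall a b c, comp (assoc_inv a b c) (assoc a b c) = idm _;
  assoc_nat : forall a a' b b' c c' (f : hom a a') (g : hom b b') (h : hom c c'),
      comp (tensm (tensm f g) h) (assoc a' b' c')
      = comp (assoc a b c) (tensm f (tensm g h));
  lunit : forall a, hom (tens unit a) a;
  lunit_inv : forall a, hom a (tens unit a);
  lunit_inv_l : forall a, comp (lunit a) (lunit_inv a) = idm _;
  lunit_inv_r : forall a, comp (lunit_inv a) (lunit a) = idm _;
  lunit_nat : forall a b (f : hom a b),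
      comp (tensm (idm unit) f) (lunit b) = comp (lunit a) f;
  runit : forall a, hom (tens a unit) a;
  runit_inv : forall a, hom a (tens a unit);
  runit_inv_l : forall a, comp (runit a) (runit_inv a) = idm _;
  runit_inv_r : forall a, comp (runit_inv a) (runit a) = idm _;
  runit_nat : forall a b (f : hom a b),
      comp (tensm f (idm unit)) (runit b) = comp (runit a) f;
  pentagon : forall a b c d,
      comp (comp (tensm (assoc a b c) (idm d)) (assoc a (tens b c) d))
           (tensm (idm a) (assoc b c d))
      = comp (assoc (tens a b) c d) (assoc a b (tens c d));
  triangle : forall a b,
      comp (assoc a unit b) (tensm (idm a) (lunit b))
      = tensm (runit a) (idm b)
}.

Arguments hom {m}.
Arguments idm {m}.
Arguments comp {m a b c}.
Arguments tens {m}.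
Arguments tensm {m a b c d}.
Arguments unit {m}.
Arguments assoc {m}.
Arguments assoc_inv {m}.
Arguments lunit {m}.
Arguments runit {m}.

Record RightEnriched (V : MonoidalCategory) := {
  eob : Type;
  ehom : eob -> eob -> ob V;
  emul : forall x y z, hom (tens (ehom x y) (ehom y z)) (ehom x z);
  eid : forall x, hom unit (ehom x x);
  emul_assoc : forall x y z w,
      comp (tensm (emul x y z) (idm (ehom z w))) (emul x z w)
      = comp (assoc (ehom x y) (ehom y z) (ehom z w))
             (comp (tensm (idm (ehom x y)) (emul y z w)) (emul x y w));
  emul_unit_l : forall x y,
      comp (tensm (eid x) (idm (ehom x y))) (emul x x y) = lunit (ehom x y);
  emul_unit_r : forall x y,
      comp (tensm (idm (ehom x y)) (eid y)) (emul x y y) = runit (ehom x y)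
}.

Arguments eob {V}.
Arguments ehom {V r}.
Arguments emul {V r}.
Arguments eid {V r}.

(* Main.v *)
Require Import Defs.
From Stdlib Require Import Setoid.

Lemma tsplit (V : MonoidalCategory) (a b c d : ob V) (f : hom a b) (g : hom c d) :
  tensm f g = comp (tensm f (idm c)) (tensm (idm b) g).
Proof. rewrite <- tens_comp, comp_id_r, comp_id_l. reflexivity. Qed.

Lemma tsplit' (V : MonoidalCategory) (a b c d : ob V) (f : hom a b) (g : hom c d) :
  tensm f g = comp (tensm (idm a) g) (tensm f (idm d)).
Proof. rewrite <- tens_comp, comp_id_r, comp_id_l. reflexivity. Qed.

Theorem mainTheorem4 (V : MonoidalCategory) (E : RightEnriched V)
  (X : eob E) (A : ob V) (XA : eob E)
  (down : forall (B : ob V) (Y : eob E),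
            hom B (ehom XA Y) -> hom (tens A B) (ehom X Y))
  (up : forall (B : ob V) (Y : eob E),
            hom (tens A B) (ehom X Y) -> hom B (ehom XA Y))
  (up_down : forall B Y (f : hom B (ehom XA Y)), up B Y (down B Y f) = f)
  (down_up : forall B Y (g : hom (tens A B) (ehom X Y)), down B Y (up B Y g) = g) :
  (exists eta : hom A (ehom X XA),
     forall (B : ob V) (Y : eob E) (f : hom B (ehom XA Y)),
       down B Y f = comp (tensm eta f) (emul X XA Y))
  <->
  ((forall (B B' : ob V) (Y : eob E) (h : hom B' B) (f : hom B (ehom XA Y)),
       comp (tensm (idm A) h) (down B Y f) = down B' Y (comp h f)) /\
   (forall (B B' : ob V) (Y : eob E) (h : hom B' B) (g : hom (tens A B) (ehom X Y)),
       comp h (up B Y g) = up B' Y (comp (tensm (idm A) h) g)) /\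
   (forall (B C : ob V) (Y Z : eob E) (f : hom B (ehom XA Y)) (g : hom C (ehom Y Z)),
       comp (tensm (down B Y f) g) (emul X Y Z)
       = comp (assoc A B C) (down (tens B C) Z (comp (tensm f g) (emul XA Y Z)))) /\
   (forall (B C : ob V) (Y Z : eob E) (f : hom (tens A B) (ehom X Y)) (g : hom C (ehom Y Z)),
       comp (tensm (up B Y f) g) (emul XA Y Z)
       = up (tens B C) Z (comp (assoc_inv A B C) (comp (tensm f g) (emul X Y Z))))).
Proof.
  assert (Hb : (forall (B B' : ob V) (Y : eob E) (h : hom B' B) (f : hom B (ehom XA Y)),
       comp (tensm (idm A) h) (down B Y f) = down B' Y (comp h f)) ->
     (forall (B B' : ob V) (Y : eob E) (h : hom B' B) (g : hom (tens A B) (ehom X Y)),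
       comp h (up B Y g) = up B' Y (comp (tensm (idm A) h) g))).
  { intros Ha B B' Y h g. rewrite <- (down_up B Y g) at 2. rewrite Ha, up_down. reflexivity. }
  assert (Hd : (forall (B C : ob V) (Y Z : eob E) (f : hom B (ehom XA Y)) (g : hom C (ehom Y Z)),
       comp (tensm (down B Y f) g) (emul X Y Z)
       = comp (assoc A B C) (down (tens B C) Z (comp (tensm f g) (emul XA Y Z)))) ->
     (forall (B C : ob V) (Y Z : eob E) (f : hom (tens A B) (ehom X Y)) (g : hom C (ehom Y Z)),
       comp (tensm (up B Y f) g) (emul XA Y Z)
       = up (tens B C) Z (comp (assoc_inv A B C) (comp (tensm f g) (emul X Y Z))))).
  { intros Hc B C Y Z f g. pose proof (Hc B C Y Z (up B Y f) g) as H.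
    rewrite down_up in H. rewrite H, <- comp_assoc, assoc_inv_r, comp_id_l, up_down.
    reflexivity. }
  split.
  - intros [eta Heta].
    assert (Ha : forall (B B' : ob V) (Y : eob E) (h : hom B' B) (f : hom B (ehom XA Y)),
       comp (tensm (idm A) h) (down B Y f) = down B' Y (comp h f)).
    { intros. rewrite !Heta, <- comp_assoc, <- tens_comp, comp_id_l. reflexivity. }
    assert (Hc : forall (B C : ob V) (Y Z : eob E) (f : hom B (ehom XA Y)) (g : hom C (ehom Y Z)),
       comp (tensm (down B Y f) g) (emul X Y Z)
       = comp (assoc A B C) (down (tens B C) Z (comp (tensm f g) (emul XA Y Z)))).
    { intros. rewrite !Heta.
      rewrite <- (comp_id_r g) at 1. rewrite tens_comp, comp_assoc, emul_assoc.
      rewrite <- comp_assoc, assoc_nat, !comp_assoc. f_equal.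
      rewrite <- comp_assoc, <- tens_comp, comp_id_r. reflexivity. }
    split; [exact Ha|split; [exact (Hb Ha)|split; [exact Hc|exact (Hd Hc)]]].
  - intros [Ha [_ [Hc _]]].
    exists (comp (runit_inv A) (down unit XA (eid XA))).
    intros B Y f.
    rewrite <- (comp_id_l f) at 2. rewrite tens_comp, comp_assoc, Hc.
    assert (E1 : comp (tensm (eid XA) f) (emul XA XA Y) = comp (lunit B) f).
    { rewrite tsplit', comp_assoc, emul_unit_l, lunit_nat. reflexivity. }
    rewrite E1, <- Ha.
    rewrite <- (comp_assoc (assoc A unit B)), triangle, <- comp_assoc, <- tens_comp,
      runit_inv_r, comp_id_l, tens_id, comp_id_l.
    reflexivity.
Qed.
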